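(* Let $M$ be a finite $\mathcal J$-above semigroup. Then $W(M^I)=\{m\in M^I:\mathcal L_m=\mathcal H_m\}$ is a union of $\mathcal J$-classes of $M^I$.
   Context: $M^I$ is $M$ with a new identity $I$ adjoined; $\mathcal L_m,\mathcal H_m$ denote the $\mathcal L$- and $\mathcal H$-classes of $m$ in $M^I$. A semigroup $M$ is finite $\mathcal J$-above if $\{y\in M: y\ge_{\mathcal J}x\}$ is finite for every $x\in M$. *)

(* Defs.v *)
From Stdlib Require Import List.
Set Implicit Arguments.

Section Semigroup.
Variables (T : Type) (mul : T -> T -> T).

Definition associative_op : Prop :=
  forall x y z, mul x (mul y z) = mul (mul x y) z.

(* M^I : M with a new identity I adjoined, I represented by None. *)
Definition mulI (a b : option T) : option T :=
  match a, b with
  | None, _ => b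
  | _, None => a
  | Some x, Some y => Some (mul x y)
  end.

Definition Lle (a b : option T) : Prop := exists s, a = mulI s b.
Definition Rle (a b : option T) : Prop := exists s, a = mulI b s.
Definition Jle (a b : option T) : Prop := exists s t, a = mulI s (mulI b t).

Definition Lrel a b : Prop := Lle a b /\ Lle b a.
Definition Rrel a b : Prop := Rle a b /\ Rle b a.
Definition Hrel a b : Prop := Lrel a b /\ Rrel a b.
Definition Jrel a b : Prop := Jle a b /\ Jle b a.

Definition inW (m : option T) : Prop := forall x, Lrel x m <-> Hrel x m.

Definition finite_J_above : Prop :=
  forall x : T, exists l : list T,
    forall y : T, Jle (Some x) (Some y) -> In y l.

End Semigroup.

(* Main.v *)
Require Import Defs.
From Stdlib Require Import List.
From Stdlib Require Import Classical Lia.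

Lemma pigeon (A : Type) (l : list A) : forall (f : nat -> A),
  (forall k, In (f k) l) -> exists i j, i < j /\ f i = f j.
Proof.
  induction l as [|a l IH]; intros f Hf.
  - destruct (Hf 0).
  - destruct (classic (exists k, f k = a)) as [[k0 Hk0]|Hno].
    + destruct (classic (exists k, k0 < k /\ f k = a)) as [[k [Hlt Hk]]|Hno2].
      * exists k0, k. split; [lia|congruence].
      * destruct (IH (fun n => f (n + k0 + 1))) as [i [j [Hij Heq]]].
        { intro k. destruct (Hf (k + k0 + 1)) as [E|E]; auto.
          exfalso. apply Hno2. exists (k + k0 + 1). split; [lia|auto]. }
        exists (i + k0 + 1), (j + k0 + 1). split; [lia|auto].
    + apply (IH f). intro k. destruct (Hf k) as [E|E]; auto.
      exfalso. apply Hno. exists k. auto.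
Qed.

Section S.
Variables (T : Type) (mul : T -> T -> T).
Hypothesis Hassoc : associative_op mul.
Hypothesis Hfin : finite_J_above mul.

Local Notation "x ** y" := (mulI mul x y) (at level 40, left associativity).

Lemma massoc a b c : a ** (b ** c) = a ** b ** c.
Proof. destruct a, b, c; simpl; auto. f_equal. apply Hassoc. Qed.

Lemma mul1l a : None ** a = a. Proof. destruct a; reflexivity. Qed.
Lemma mul1r a : a ** None = a. Proof. destruct a; reflexivity. Qed.

Lemma finI : forall a : option T, exists l, forall y, Jle mul a y -> In y l.
Proof.
  intros [x|].
  - destruct (Hfin x) as [l Hl]. exists (None :: map Some l).
    intros [y|] H; [right; apply in_map; apply Hl; auto | left; auto].
  - exists (None :: nil). intros [y|] [s [t H]]; [|left; auto].
    destruct s, t; discriminate.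
Qed.

Fixpoint pw (c : option T) (k : nat) : option T :=
  match k with 0 => None | S k => c ** pw c k end.

Lemma pwS c k : pw c (S k) = pw c k ** c.
Proof.
  induction k; simpl. destruct c; reflexivity.
  simpl in IHk. rewrite IHk, massoc, IHk; auto.
Qed.

Lemma pwD c i p : pw c (i + p) = pw c i ** pw c p.
Proof.
  induction i; simpl. rewrite ?mul1l; auto. rewrite IHi, massoc; auto.
Qed.

Lemma Jle_refl a : Jle mul a a.
Proof. exists None, None. rewrite mul1l, mul1r; auto. Qed.

Lemma Jle_trans a b c : Jle mul a b -> Jle mul b c -> Jle mul a c.
Proof.
  intros [s [t H]] [s' [t' H']]. exists (s ** s'), (t' ** t).
  subst. rewrite !massoc. auto.
Qed.

Lemma stabR a b : Jle mul a (a ** b) -> Rle mul a (a ** b).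
Proof.
  intros [u [v H]].
  set (c := b ** v).
  assert (Hk : forall k, a = pw u k ** a ** pw c k).
  { induction k. simpl. rewrite ?mul1l, ?mul1r; auto.
    rewrite pwS. simpl. rewrite IHk at 1.
    rewrite H at 1. unfold c. rewrite !massoc. auto. }
  destruct (finI a) as [l Hl].
  destruct (pigeon _ l (pw c)) as [i [j [Hij Heq]]].
  { intro k. apply Hl. exists (pw u k ** a), None. rewrite mul1r. apply Hk. }
  assert (Ha : a = a ** pw c (j - i)).
  { rewrite (Hk i) at 1. rewrite Heq.
    replace j with (i + (j - i)) by lia. rewrite pwD.
    rewrite !massoc. rewrite <- (Hk i). replace (i + (j - i) - i) with (j - i) by lia. auto. }
  destruct (j - i) as [|p] eqn:E; [lia|].
  exists (v ** pw c p). rewrite Ha at 1. simpl. unfold c. rewrite !massoc. auto.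
Qed.

Lemma stabL a b : Jle mul a (b ** a) -> Lle mul a (b ** a).
Proof.
  intros [u [v H]].
  set (c := u ** b).
  assert (Hk : forall k, a = pw c k ** a ** pw v k).
  { induction k. simpl. rewrite ?mul1l, ?mul1r; auto.
    rewrite pwS. simpl. rewrite IHk at 1.
    rewrite H at 1. unfold c. rewrite !massoc. auto. }
  destruct (finI a) as [l Hl].
  destruct (pigeon _ l (pw c)) as [i [j [Hij Heq]]].
  { intro k. apply Hl. exists None, (a ** pw v k). rewrite mul1l, massoc. apply Hk. }
  assert (Ha : a = pw c (j - i) ** a).
  { rewrite (Hk i) at 1. rewrite Heq.
    replace j with ((j - i) + i) by lia. rewrite pwD.
    rewrite <- !massoc. rewrite (massoc (pw c i)), <- (Hk i).
    replace (j - i + i - i) with (j - i) by lia. auto. }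
  destruct (j - i) as [|p] eqn:E; [lia|].
  exists (pw c p ** u). rewrite Ha at 1. rewrite pwS. unfold c. rewrite !massoc. auto.
Qed.

Lemma lemD a b : Jrel mul a b -> exists z, Lrel mul a z /\ Rrel mul z b.
Proof.
  intros [[s [t H]] Hba].
  exists (b ** t).
  assert (J1 : Jle mul (b ** t) b) by (exists None, t; rewrite mul1l; auto).
  assert (J2 : Jle mul a (b ** t)) by (exists s, None; rewrite mul1r; auto).
  split; split.
  - exists s. auto.
  - rewrite H. apply stabL.
    apply (Jle_trans _ _ _ J1). apply (Jle_trans _ _ _ Hba).
    exists None, None. rewrite mul1l, mul1r, <- H. auto.
  - exists t. auto.
  - apply stabR. apply (Jle_trans _ _ _ Hba). auto.
Qed.

Lemma Lle_J a b : Lle mul a b -> Jle mul a b.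
Proof. intros [s H]. exists s, None. rewrite mul1r; auto. Qed.

Lemma Rle_trans a b c : Rle mul a b -> Rle mul b c -> Rle mul a c.
Proof. intros [s H] [s' H']. exists (s' ** s). subst. rewrite massoc; auto. Qed.

Lemma inW_R m y : inW mul m -> Jrel mul y m -> Rrel mul y m.
Proof.
  intros HW HJ.
  destruct (lemD m y) as [z [[L1 L2] [R1 R2]]].
  { destruct HJ; split; auto. }
  assert (Hz : Hrel mul z m) by (apply HW; split; auto).
  destruct Hz as [_ [Rz1 Rz2]].
  split; eapply Rle_trans; eauto.
Qed.

End S.

Theorem lemma8p4 (T : Type) (mul : T -> T -> T)
  (Hassoc : associative_op mul) (Hfin : finite_J_above mul) :
  forall m n : option T, Jrel mul m n -> inW mul m -> inW mul n.
Proof.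
  intros m n HJ HW x. split.
  - intros HL. split; auto.
    destruct HJ as [J1 J2].
    assert (HxJ : Jrel mul x m).
    { destruct HL as [L1 L2]. split.
      - eapply Jle_trans; [auto| apply Lle_J; eauto | auto].
      - eapply Jle_trans; [auto| eauto | apply Lle_J; eauto]. }
    destruct (inW_R _ _ Hassoc Hfin _ _ HW HxJ) as [R1 R2].
    destruct (inW_R _ _ Hassoc Hfin _ _ HW (conj J2 J1)) as [R3 R4].
    split; eapply Rle_trans; eauto.
  - intros [H _]; auto.
Qed.
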